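(* Let $q$ be a power of $2$ and let $\mathscr{C}$ be an $\mathbb{F}_q$-linear additive conjucyclic code of length $n$ over $\mathbb{F}_{q^2}$. Then its alternating dual $\mathscr{C}^{\perp_a}$ is also an $\mathbb{F}_q$-linear additive conjucyclic code.
   Context: An $\mathbb{F}_q$-linear additive code of length $n$ over $\mathbb{F}_{q^2}$ is an $\mathbb{F}_q$-subspace of $\mathbb{F}_{q^2}^n$; it is conjucyclic if closed under $T(c_0,\ldots,c_{n-1})=(c_{n-1}^q,c_0,\ldots,c_{n-2})$. Fix a primitive element $\beta$ of $\mathbb{F}_{q^2}$; the alternating inner product is $\langle u,v\rangle_a=(\beta^{2q}-\beta^2)\sum_{i=0}^{n-1}(u_iv_i^q-u_i^qv_i)$ and $\mathscr{C}^{\perp_a}=\{v\in\mathbb{F}_{q^2}^n:\langle u,v\rangle_a=0\ \forall u\in\mathscr{C}\}$. *)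

(* Defs.v *)
From HB Require Import structures.
From mathcomp Require Import all_boot all_order all_algebra all_field.
Set Implicit Arguments. Unset Strict Implicit. Unset Printing Implicit Defensive.
Import Order.TTheory GRing.Theory.
Local Open Scope ring_scope.

Section Codes.
Variables (L : finFieldType) (q n : nat).

Definition coord_nat (c : 'rV[L]_n) (k : nat) : L :=
  if insub k is Some j then c 0 j else 0.

Definition conj_shift (c : 'rV[L]_n) : 'rV[L]_n :=
  \row_(i < n) (if (i : nat) == 0%N then (coord_nat c n.-1) ^+ q
                else coord_nat c (i : nat).-1).

(* F_q = {a in F_{q^2} | a^q = a}; an F_q-linear additive code is an
   F_q-subspace of F_{q^2}^n *)
Definition Fq_linear (C : {set 'rV[L]_n}) : Prop :=
  [/\ (0 : 'rV[L]_n) \in C,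
      (forall u v, u \in C -> v \in C -> u + v \in C) &
      (forall (a : L) u, a ^+ q = a -> u \in C -> a *: u \in C)].

Definition conjucyclic (C : {set 'rV[L]_n}) : Prop :=
  forall c, c \in C -> conj_shift c \in C.

Definition alt_ip (beta : L) (u v : 'rV[L]_n) : L :=
  (beta ^+ (2 * q) - beta ^+ 2) *
    \sum_(i < n) (u 0 i * (v 0 i) ^+ q - (u 0 i) ^+ q * v 0 i).

Definition alt_dual (beta : L) (C : {set 'rV[L]_n}) : {set 'rV[L]_n} :=
  [set v | [forall u in C, alt_ip beta u v == 0]].

End Codes.

(* Main.v *)
Require Import Defs.
From HB Require Import structures.
From mathcomp Require Import all_boot all_order all_algebra all_field.
Import GRing.Theory.
Local Open Scope ring_scope.

Section H.
Variables (L : finFieldType) (m n : nat).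
Hypothesis ch2 : (2 \in [pchar L])%N.
Hypothesis cardL : #|L| = ((2 ^ m) ^ 2)%N.
Local Notation q := (2 ^ m)%N.

Definition S (u v : 'rV[L]_n) : L :=
  \sum_(i < n) (u 0 i * (v 0 i) ^+ q - (u 0 i) ^+ q * v 0 i).

Lemma altE beta u v : alt_ip q beta u v = (beta ^+ (2 * q) - beta ^+ 2) * S u v.
Proof. by []. Qed.

Lemma frobD (x y : L) : (x + y) ^+ q = x ^+ q + y ^+ q.
Proof.
apply: exprDn_pchar; rewrite pnatX; apply/orP; left.
by rewrite pnatE.
Qed.

Lemma frobq (x : L) : (x ^+ q) ^+ q = x.
Proof. by rewrite -exprM mulnn -cardL expf_card. Qed.
Lemma frob0 : (0 : L) ^+ q = 0.
Proof. by rewrite expr0n expn_eq0. Qed.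

Lemma S0 u : S u 0 = 0.
Proof. by rewrite /S big1 // => i _; rewrite mxE frob0 !mulr0 subrr. Qed.

Lemma SD u v w : S u (v + w) = S u v + S u w.
Proof.
rewrite /S -big_split; apply: eq_bigr => i _; rewrite !mxE frobD.
by rewrite mulrDr mulrDr opprD addrACA.
Qed.

Lemma SZ u (a : L) v : a ^+ q = a -> S u (a *: v) = a * S u v.
Proof.
move=> ha; rewrite /S mulr_sumr; apply: eq_bigr => i _; rewrite !mxE exprMn ha.
by rewrite mulrBr; congr (_ - _); rewrite mulrCA.
Qed.
End H.

Lemma coord_natE (L : finFieldType) n (c : 'rV[L]_n) k (Hk : (k < n)%N) :
  coord_nat c k = c 0 (Ordinal Hk).
Proof. by rewrite /coord_nat insubT. Qed.
Arguments coord_natE {L n} c {k} Hk.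

Lemma Sshift (L : finFieldType) m n (ch2 : (2 \in [pchar L])%N)
  (cardL : #|L| = ((2 ^ m) ^ 2)%N) (u v : 'rV[L]_n.+1) :
  @S L m _ (conj_shift (2 ^ m) u) (conj_shift (2 ^ m) v) = @S L m _ u v.
Proof.
rewrite /S big_ord_recl big_ord_recr /= addrC; congr (_ + _); last first.
  apply: eq_bigr => i _; rewrite !mxE /=.
  have Hi : (i < n.+1)%N by apply: ltnW; rewrite ltnS.
  rewrite !(coord_natE _ Hi).
  by have -> : Ordinal Hi = widen_ord (leqnSn n) i by apply: val_inj.
rewrite !mxE /= !(coord_natE _ (ltnSn n)).
have -> : Ordinal (ltnSn n) = ord_max by apply: val_inj.
rewrite !frobq // -(oppr_pchar2 ch2 (_ - _)) opprB; congr (_ - _); exact: mulrC.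
Qed.

Lemma shift_inj (L : finFieldType) m n (ch2 : (2 \in [pchar L])%N)
  (cardL : #|L| = ((2 ^ m) ^ 2)%N) : injective (@conj_shift L (2 ^ m) n.+1).
Proof.
move=> c d E; apply/rowP => j.
have E' k : conj_shift (2 ^ m) c 0 k = conj_shift (2 ^ m) d 0 k by rewrite E.
have [jn|] := ltnP j n.
  have := E' (lift ord0 (Ordinal jn)); rewrite !mxE /= !(coord_natE _ (ltn_ord j)).
  by have -> : Ordinal (ltn_ord j) = j by apply: val_inj.
move=> nj; have jm : j = ord_max by apply: val_inj => /=; apply/eqP; rewrite eqn_leq nj -ltnS ltn_ord.
have := E' ord0; rewrite !mxE /= !(coord_natE _ (ltnSn n)).
have -> : Ordinal (ltnSn n) = j by rewrite jm; apply: val_inj.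
by move=> h; rewrite -(@frobq L m cardL (c 0 j)) h frobq.
Qed.

Theorem corollary4p7 (L : finFieldType) (m n : nat) (beta : L)
  (C : {set 'rV[L]_n}) :
  (0 < m)%N ->
  #|L| = ((2 ^ m) ^ 2)%N ->
  (#|L|.-1).-primitive_root beta ->
  Fq_linear (2 ^ m) C ->
  conjucyclic (2 ^ m) C ->
  Fq_linear (2 ^ m) (alt_dual (2 ^ m) beta C) /\
  conjucyclic (2 ^ m) (alt_dual (2 ^ m) beta C).
Proof.
move=> m0 cardL _ _ cC.
have ch2 : (2 \in [pchar L])%N.
  by apply: (@card_finPcharP _ _ (m * 2)); rewrite // cardL expnM.
split.
  split.
  - by rewrite inE; apply/forall_inP => u _; rewrite altE S0 // mulr0.
  - move=> v w; rewrite !inE => /forall_inP Hv /forall_inP Hw.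
    apply/forall_inP => u uC; rewrite altE SD // mulrDr -!altE.
    by rewrite (eqP (Hv u uC)) (eqP (Hw u uC)) addr0.
  - move=> a v ha; rewrite !inE => /forall_inP Hv.
    apply/forall_inP => u uC; rewrite altE SZ // mulrCA -altE.
    by rewrite (eqP (Hv u uC)) mulr0.
case: n C cC => [|n] C cC v.
  by have -> : conj_shift (2 ^ m) v = v by apply/rowP => -[].
rewrite !inE => /forall_inP Hv; apply/forall_inP => u uC.
have sub : [set conj_shift (2 ^ m) x | x in C] \subset C.
  by apply/subsetP => x /imsetP [y yC ->]; exact: cC.
have eqC : [set conj_shift (2 ^ m) x | x in C] = C.
  apply/eqP; rewrite eqEcard sub card_imset ?leqnn //; exact: shift_inj cardL.
move: uC; rewrite -{1}eqC => /imsetP [w wC ->].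
by rewrite altE Sshift // -altE (eqP (Hv w wC)).
Qed.
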